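(* Let $A\subset\mathbb{N}$ be a normal set. Then there exist $x,y\in A$ such that $x^2+y^2$ is a perfect square, and there exist $u,v\in A$ such that $u^2-v^2$ is a perfect square.
   Context: $\mathbb{N}=\{1,2,\dots\}$. A sequence in $\{0,1\}^{\mathbb{N}}$ is normal if every finite binary word $w$ occurs in it with asymptotic frequency $2^{-|w|}$. A set $A\subset\mathbb{N}$ is normal if its indicator sequence is normal. *)

(* Defs.v *)
From mathcomp Require Import all_boot all_order all_algebra.
Set Implicit Arguments. Unset Strict Implicit. Unset Printing Implicit Defensive.
Import Order.TTheory GRing.Theory Num.Theory.

Definition occurs_at (a : nat -> bool) (w : seq bool) (n : nat) : bool :=
  all (fun i => a (n + i) == nth false w i) (iota 0 (size w)).

Definition occ_count (a : nat -> bool) (w : seq bool) (N : nat) : nat :=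
  count (occurs_at a w) (iota 1 N).

Definition normal_seq (a : nat -> bool) : Prop :=
  forall (w : seq bool) (eps : rat), (0 < eps)%R ->
    exists N0 : nat, forall N : nat, (N0 <= N)%N ->
      (`| (occ_count a w N)%:R / N%:R - (2%:R ^+ size w)^-1 | < eps)%R.

(* A subset A of N = {1,2,...} (given as a predicate on nat with 0 excluded)
   is normal if its indicator sequence (a_n = [n \in A], n >= 1) is normal. *)
Definition normal_set (A : pred nat) : Prop :=
  ~~ A 0 /\ normal_seq A.

(* Main.v *)
Require Import Defs.
From mathcomp Require Import all_boot all_order all_algebra.
From mathcomp Require Import lra ring zify.
Set Implicit Arguments. Unset Strict Implicit. Unset Printing Implicit Defensive.
Import Order.TTheory GRing.Theory Num.Theory.
Local Open Scope ring_scope.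

Definition win (a : nat -> bool) (n l : nat) : seq bool := mkseq (fun i => a (n + i)%N) l.

Lemma occurs_win a w n : occurs_at a w n = (win a n (size w) == w).
Proof.
apply/idP/eqP.
- move/allP => H. apply: (@eq_from_nth _ false); rewrite ?size_mkseq // => i Hi.
  rewrite nth_mkseq //. apply/eqP/H. by rewrite mem_iota.
- move=> Hw; apply/allP => i; rewrite mem_iota => /andP[_ Hi].
  by rewrite -{1}Hw nth_mkseq.
Qed.

Fixpoint allw (l : nat) : seq (seq bool) :=
  if l is l'.+1 then [seq false :: w | w <- allw l'] ++ [seq true :: w | w <- allw l']
  else [:: [::]].

Lemma size_allw l : size (allw l) = (2 ^ l)%N.
Proof. elim: l => //= l IH; by rewrite size_cat !size_map IH expnS mul2n addnn. Qed.

Lemma sum_allw_pick l (F : seq bool -> rat) w0 : size w0 = l ->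
  \sum_(w <- allw l) (w == w0)%:R * F w = F w0.
Proof.
elim: l F w0 => [|l IH] F w0.
- by case: w0 => //= _; rewrite big_cons big_nil eqxx mul1r addr0.
- case: w0 => // c v0 /= [Hv]. rewrite big_cat !big_map /=.
  case: c.
  + rewrite big1 ?add0r; last by move=> w _; rewrite eqseq_cons /= mul0r.
    rewrite -(IH (fun w => F (true :: w)) v0 Hv). apply: eq_bigr => w _.
    by rewrite eqseq_cons.
  + rewrite [X in _ + X]big1 ?addr0; last by move=> w _; rewrite eqseq_cons /= mul0r.
    rewrite -(IH (fun w => F (false :: w)) v0 Hv). apply: eq_bigr => w _.
    by rewrite eqseq_cons.
Qed.

Definition eb (b : bool) : rat := if b then 1 else -1.

Lemma sum_allw_cons l (F : seq bool -> rat) :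
  \sum_(w <- allw l.+1) F w = \sum_(w <- allw l) (F (false :: w) + F (true :: w)).
Proof. by rewrite /= big_cat !big_map big_split. Qed.

Lemma sum_allw_const l (c : rat) : \sum_(w <- allw l) c = (2 ^ l)%:R * c.
Proof.
elim: l => [|l IH]; first by rewrite /= big_cons big_nil addr0 mul1r.
by rewrite sum_allw_cons big_split /= IH expnS natrM; ring.
Qed.

Lemma sum_allw_e1 l i : (i < l)%N -> \sum_(w <- allw l) eb (nth false w i) = 0.
Proof.
elim: l i => [|l IH] i // Hi. rewrite sum_allw_cons.
case: i Hi => [|i] Hi /=.
- by rewrite /eb big1 // => w _; rewrite addrC subrr.
- by rewrite big_split /= !IH // addr0.
Qed.

Lemma ebb b : eb b * eb b = 1.
Proof. by case: b; rewrite /eb ?mulr1 ?mulrNN ?mulr1. Qed.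

Lemma sum_allw_e2 l i k : (i < l)%N -> (k < l)%N ->
  \sum_(w <- allw l) eb (nth false w i) * eb (nth false w k) = if i == k then (2 ^ l)%:R else 0.
Proof.
case: eqP => [<-|].
  by move=> _ _; rewrite (eq_bigr (fun _ => 1)) ?sum_allw_const ?mulr1 // => w _; rewrite ebb.
elim: l i k => [|l IH] i k // Hne Hi Hk. rewrite sum_allw_cons.
case: i Hi Hne => [|i] Hi Hne; case: k Hk Hne => [|k] Hk Hne //=.
- by rewrite big1 // => w _; ring.
- by rewrite big1 // => w _; ring.
- rewrite big_split /= IH ?addr0 //; by move=> E; apply: Hne; rewrite E.
Qed.

Lemma count_sumr (T : Type) (P : pred T) (s : seq T) :
  (count P s)%:R = \sum_(x <- s) (P x)%:R :> rat.
Proof.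
elim: s => [|x s IH]; first by rewrite big_nil.
by rewrite big_cons /= natrD IH.
Qed.

Lemma unif_N0 (a : nat -> bool) (Ha : normal_seq a) (s : seq (seq bool)) (eps : rat) :
  0 < eps -> exists N0, forall N, (N0 <= N)%N -> forall w, w \in s ->
    `| (occ_count a w N)%:R / N%:R - (2%:R ^+ size w)^-1 | < eps.
Proof.
move=> He; elim: s => [|w s [N1 H1]]; first by exists 0%N.
have [N2 H2] := Ha w eps He.
exists (maxn N1 N2) => N HN v; rewrite inE => /orP[/eqP->|Hv].
- apply: H2; exact: leq_trans (leq_maxr _ _) HN.
- apply: H1 => //; exact: leq_trans (leq_maxl _ _) HN.
Qed.

Lemma sum_decomp (a : nat -> bool) l (F : seq bool -> rat) N :
  \sum_(n <- iota 1 N) F (win a n l) =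
  \sum_(w <- allw l) F w * (occ_count a w N)%:R.
Proof.
transitivity (\sum_(n <- iota 1 N) \sum_(w <- allw l) (w == win a n l)%:R * F w).
  by apply: eq_bigr => n _; rewrite sum_allw_pick // size_mkseq.
rewrite exchange_big /=. rewrite big_seq [RHS]big_seq. apply: eq_bigr => w Hw.
have Hs : size w = l.
  elim: l w Hw {F} => [|l IH] w /=; first by rewrite inE => /eqP->.
  rewrite mem_cat => /orP[] /mapP[v Hv ->] /=; by rewrite (IH v Hv).
rewrite /occ_count count_sumr mulr_sumr; apply: eq_bigr => n _.
by rewrite occurs_win Hs eq_sym mulrC.
Qed.

Lemma avg_lim (a : nat -> bool) (Ha : normal_seq a) (l : nat) (F : seq bool -> rat) (eps : rat) :
  0 < eps -> exists N0, forall N, (N0 <= N)%N ->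
  `| (\sum_(n <- iota 1 N) F (win a n l)) / N%:R - (\sum_(w <- allw l) F w) * (2%:R ^+ l)^-1 | < eps.
Proof.
move=> He.
set S := \sum_(w <- allw l) `|F w|.
have HS : 0 <= S by apply: sumr_ge0 => w _.
have He' : 0 < eps / (1 + S) by apply: divr_gt0 => //; lra.
have [N0 H0] := unif_N0 Ha (allw l) He'.
exists N0 => N HN.
rewrite sum_decomp mulr_suml mulr_suml -sumrB.
apply: (le_lt_trans (ler_norm_sum _ _ _)).
apply: (@le_lt_trans _ _ (\sum_(w <- allw l) `|F w| * (eps / (1 + S)))).
  rewrite big_seq [X in _ <= X]big_seq; apply: ler_sum => w Hw.
  have Hs : size w = l.
    elim: l w Hw {F S HS He' H0} => [|l IH] w /=; first by rewrite inE => /eqP->.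
    rewrite mem_cat => /orP[] /mapP[v Hv ->] /=; by rewrite (IH v Hv).
  rewrite -mulrA -mulrBr normrM ler_wpM2l //.
  by apply: ltW; rewrite -Hs; apply: H0.
rewrite -mulr_suml -/S.
rewrite mulrA ltr_pdivrMr; last lra.
have : 0 <= S * eps by apply: mulr_ge0 => //; exact: ltW.
nra.
Qed.

Definition Y (a : nat -> bool) q m n : rat := \sum_(j < m) eb (a (n + j * q)%N).
Definition Xw q m (w : seq bool) : rat := \sum_(j < m) eb (nth false w (j * q)).

Lemma Xw_win a q m n : (0 < q)%N -> Xw q m (win a n (m * q)) = Y a q m n.
Proof.
move=> Hq; apply: eq_bigr => j _; rewrite nth_mkseq //.
by rewrite ltn_pmul2r.
Qed.

Lemma sumX2 q m : (0 < q)%N ->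
  \sum_(w <- allw (m * q)) Xw q m w ^+ 2 = m%:R * (2 ^ (m * q))%:R.
Proof.
move=> Hq.
transitivity (\sum_(w <- allw (m * q)) \sum_(j < m) \sum_(j' < m)
   eb (nth false w (j * q)) * eb (nth false w (j' * q))).
  apply: eq_bigr => w _; rewrite expr2 /Xw mulr_suml; apply: eq_bigr => j _.
  by rewrite mulr_sumr.
rewrite exchange_big /=.
transitivity (\sum_(j < m) (2 ^ (m * q))%:R : rat).
  apply: eq_bigr => j _; rewrite exchange_big /=.
  rewrite (bigD1 j) //= sum_allw_e2 ?eqxx ?ltn_pmul2r //.
  rewrite big1 ?addr0 // => j' Hj'.
  rewrite sum_allw_e2 ?ltn_pmul2r //. rewrite eqn_pmul2r //.
  by have /negbTE -> : (j : nat) != j' by rewrite eq_sym.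
by rewrite sumr_const card_ord mulr_natl.
Qed.

Lemma Y2_bound a (Ha : normal_seq a) q m : (0 < q)%N ->
  exists N0, forall N, (N0 <= N)%N ->
  \sum_(n <- iota 1 N) (Y a q m n) ^+ 2 <= (m%:R + 1) * N%:R.
Proof.
move=> Hq.
have [N0 H0] := avg_lim Ha (m * q) (fun w => Xw q m w ^+ 2) (ltr01 : (0:rat) < 1).
exists (maxn N0 1) => N HN.
have HN0 : (N0 <= N)%N by exact: leq_trans (leq_maxl _ _) HN.
have HN1 : (0 < N)%N by exact: leq_trans (leq_maxr _ _) HN.
have := H0 N HN0; rewrite sumX2 // natrX -mulrA mulfV; last first.
  by rewrite expf_neq0 // pnatr_eq0.
rewrite mulr1.
rewrite (eq_bigr (fun n => Y a q m n ^+ 2)); last by move=> n _; rewrite Xw_win.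
set S := \sum_(n <- _) _.
move=> H; have H1 : S / N%:R < m%:R + 1.
  move: H; rewrite ltr_norml; case/andP => _; lra.
have HNp : (0 : rat) < N%:R by rewrite ltr0n.
move: H1; rewrite ltr_pdivrMr // => H1; lra.
Qed.

Lemma le_sum_mem (f : nat -> rat) (s : seq nat) x : (forall n, 0 <= f n) ->
  x \in s -> f x <= \sum_(i <- s) f i.
Proof.
move=> Hf; elim: s => // y s IH; rewrite inE big_cons => /orP[/eqP->|Hx].
- have : 0 <= \sum_(i <- s) f i by apply: sumr_ge0.
  lra.
- have := IH Hx; have := Hf y; lra.
Qed.

Lemma sub_aligned (f : nat -> rat) q K : (0 < q)%N -> (forall n, 0 <= f n) ->
  \sum_(k <- iota 1 K) f (q * k)%N <= \sum_(n <- iota 1 (q * K)) f n.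
Proof.
move=> Hq Hf; elim: K => [|K IH]; first by rewrite muln0 !big_nil.
rewrite -[K.+1]addn1 iotaD big_cat mulnDr muln1 iotaD big_cat /=. apply: lerD => //.
rewrite big_cons big_nil addr0; apply: le_sum_mem => //.
rewrite mem_iota; apply/andP; split; lia.
Qed.

Lemma shift1 (g : nat -> rat) K :
  \sum_(k <- iota 1 K) g k.+1 = \sum_(k <- iota 1 K) g k - g 1%N + g K.+1.
Proof.
have E1 : \sum_(k <- iota 1 K.+1) g k = g 1%N + \sum_(k <- iota 1 K) g k.+1.
  rewrite /= big_cons -[iota 2 K]/(iota (1+1) K) iotaDl big_map.
  by congr (_ + _); apply: eq_bigr => k _; rewrite add1n.
have E2 : \sum_(k <- iota 1 K.+1) g k = \sum_(k <- iota 1 K) g k + g K.+1.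
  by rewrite -[in LHS](addn1 K) iotaD big_cat big_seq1 add1n.
lra.
Qed.

Lemma shift_sum (f : nat -> rat) K j : (forall n, `|f n| <= 1) ->
  \sum_(k <- iota 1 K) f (k + j)%N <= \sum_(k <- iota 1 K) f k + 2 * j%:R.
Proof.
move=> Hf; elim: j => [|j IH].
  by rewrite mulr0 addr0 (eq_bigr f) // => k _; rewrite addn0.
rewrite (eq_bigr (fun k => (fun i => f (i + j)%N) k.+1)); last by move=> k _; rewrite addSnnS.
have := shift1 (fun i => f (i + j)%N) K; rewrite /= => ->.
have := Hf (1 + j)%N; have := Hf (K.+1 + j)%N; rewrite !ler_norml => /andP[_ H1] /andP[H2 _].
rewrite -natr1; lra.
Qed.
Lemma final_arith (P Q K C S1 S2 E : rat) : 1 <= Q -> P = 8 * Q -> 0 <= K ->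
  -4 * P * S1 <= 4 * S2 + P ^+ 2 * K ->
  S2 <= (2 * P + 1) * (Q * K) ->
  S1 <= 2 * P * E + 8 * P ^+ 2 ->
  E = 2 * C - K ->
  11 * K <= 32 * C + 64 * P.
Proof.
move=> HQ HP HK h1 h2 h3 h4.
have HP1 : 1 <= P by lra.
have hP2 : 0 < P ^+ 2 by apply: exprn_gt0; lra.
rewrite -(ler_pM2l hP2).
have h3' : 4 * P * S1 <= 4 * P * (2 * P * E + 8 * P ^+ 2) by rewrite ler_pM2l //; lra.
have hPK : P * K <= P ^+ 2 * K.
  rewrite expr2 -mulrA ler_pM2l ?ler_peMl //; lra.
have e1 : 4 * P * (2 * P * E + 8 * P ^+ 2) = 16 * (P ^+ 2 * C) - 8 * (P ^+ 2 * K) + 32 * (P ^+ 2 * P).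
  by rewrite h4; ring.
have e2 : 8 * ((2 * P + 1) * (Q * K)) = 2 * (P ^+ 2 * K) + P * K.
  by rewrite HP; ring.
have e3 : P ^+ 2 * (11 * K) = 11 * (P ^+ 2 * K) by ring.
have e4 : P ^+ 2 * (32 * C + 64 * P) = 32 * (P ^+ 2 * C) + 64 * (P ^+ 2 * P) by ring.
have e5 : -4 * P * S1 = - (4 * P * S1) by ring.
rewrite e3 e4; rewrite e1 in h3'; have h2' : 8 * S2 <= 8 * ((2 * P + 1) * (Q * K)) by lra. rewrite e2 in h2'; clear h2 e2; rewrite e5 in h1.
lra.
Qed.

Lemma sum_const_seq (T : Type) (s : seq T) (c : rat) : \sum_(x <- s) c = (size s)%:R * c.
Proof. elim: s => [|x s IH]; first by rewrite big_nil mul0r. by rewrite big_cons IH /= -natr1; ring. Qed.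

Definition cntq (a : nat -> bool) q K : rat := \sum_(k <- iota 1 K) (a (q * k)%N)%:R.

Lemma eb_nat b : eb b = 2 * b%:R - 1.
Proof. by case: b; rewrite /eb /=; ring. Qed.

Lemma eb_norm b : `|eb b| <= 1.
Proof. by case: b; rewrite /eb ?normrN normr1. Qed.

Lemma dens a (Ha : normal_seq a) q : (0 < q)%N -> exists K0, forall K, (K0 <= K)%N ->
  11 * K%:R <= 32 * cntq a q K + 64 * (8 * q)%N%:R.
Proof.
move=> Hq.
set p := (8 * q)%N; set m := (2 * p)%N.
have [N0 H0] := Y2_bound Ha m Hq.
exists N0 => K HK.
have HqK : (N0 <= q * K)%N by apply: leq_trans HK (leq_pmull _ Hq).
set S2 := \sum_(k <- iota 1 K) Y a q m (q * k)%N ^+ 2.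
set S1 := \sum_(k <- iota 1 K) Y a q m (q * k)%N.
set E := \sum_(k <- iota 1 K) eb (a (q * k)%N).
set P : rat := p%:R.
have h2 : S2 <= (2 * P + 1) * (q%:R * K%:R).
  apply: le_trans (@sub_aligned (fun n => Y a q m n ^+ 2) q K Hq (fun n => sqr_ge0 _)) _.
  by rewrite -natrM (le_trans (H0 _ HqK)) // /m natrM.
have h1 : -4 * P * S1 <= 4 * S2 + P ^+ 2 * K%:R.
  have -> : P ^+ 2 * K%:R = \sum_(k <- iota 1 K) P ^+ 2 by rewrite sum_const_seq size_iota mulrC.
  rewrite mulr_sumr mulr_sumr -big_split /=.
  apply: ler_sum => k _; have := sqr_ge0 (2 * Y a q m (q * k)%N + P); nra.
have h3 : S1 <= 2 * P * E + 8 * P ^+ 2.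
  have -> : S1 = \sum_(j < m) \sum_(k <- iota 1 K) eb (a (q * (k + j))%N).
    rewrite /S1 /Y exchange_big /=; apply: eq_bigr => j _; apply: eq_bigr => k _.
    by rewrite mulnDr [(j * q)%N]mulnC.
  apply: (@le_trans _ _ (\sum_(j < m) (E + 2 * m%:R))).
    apply: ler_sum => j _.
    apply: le_trans (@shift_sum (fun i => eb (a (q * i)%N)) K j _) _.
      by move=> n; apply: eb_norm.
    rewrite lerD2l ler_wpM2l // ler_nat; exact: ltnW.
  rewrite sumr_const card_ord -mulr_natl /m natrM -/P; lra.
have h4 : E = 2 * cntq a q K - K%:R.
  have -> : (K%:R : rat) = \sum_(k <- iota 1 K) 1 by rewrite sum_const_seq size_iota mulr1.
  rewrite /E /cntq mulr_sumr -sumrB.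
  by apply: eq_bigr => k _; rewrite eb_nat.
have HQ : 1 <= (q%:R : rat) by rewrite ler1n.
apply: (final_arith HQ _ _ h1 h2 h3 h4) => //.
by rewrite /P /p natrM.
Qed.

Definition two (a : nat -> bool) c1 c2 c3 k :=
  [|| a (c1 * k)%N && a (c2 * k)%N, a (c1 * k)%N && a (c3 * k)%N | a (c2 * k)%N && a (c3 * k)%N].

Lemma two_exists a (Ha : normal_seq a) c1 c2 c3 : (0 < c1)%N -> (0 < c2)%N -> (0 < c3)%N ->
  exists k, (0 < k)%N /\ two a c1 c2 c3 k.
Proof.
move=> H1 H2 H3.
have [K1 D1] := dens Ha H1; have [K2 D2] := dens Ha H2; have [K3 D3] := dens Ha H3.
set K := maxn (maxn K1 K2) (maxn K3 (512 * (c1 + c2 + c3)).+1).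
have HK1 : (K1 <= K)%N by rewrite /K !leq_max leqnn.
have HK2 : (K2 <= K)%N by rewrite /K !leq_max leqnn !orbT.
have HK3 : (K3 <= K)%N by rewrite /K !leq_max leqnn !orbT.
have HK4 : (512 * (c1 + c2 + c3) < K)%N by rewrite /K !leq_max leqnn !orbT.
case: (boolP (has (two a c1 c2 c3) (iota 1 K))).
  case/hasP => k; rewrite mem_iota => /andP[Hk _] Ht; by exists k.
move/hasPn => Hno.
have Hsum : cntq a c1 K + cntq a c2 K + cntq a c3 K <= K%:R.
  have -> : (K%:R : rat) = \sum_(k <- iota 1 K) 1 by rewrite sum_const_seq size_iota mulr1.
  rewrite /cntq -!big_split /= big_seq [X in _ <= X]big_seq; apply: ler_sum => k Hk.
  move: (Hno k Hk); rewrite /two.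
  by case: (a (c1 * k)%N); case: (a (c2 * k)%N); case: (a (c3 * k)%N).
have := D1 K HK1; have := D2 K HK2; have := D3 K HK3.
have : (512 * (c1 + c2 + c3))%N%:R + 1 <= (K%:R : rat) by rewrite natr1 ler_nat.
rewrite !natrM !natrD. lra.
Qed.

Local Close Scope ring_scope.
Unset Implicit Arguments.
Set Strict Implicit.

Theorem mainTheorem5 (A : pred nat) :
  normal_set A ->
  (exists x y z : nat, [/\ A x, A y, 0 < z & x ^ 2 + y ^ 2 = z ^ 2]) /\
  (exists u v z : nat, [/\ A u, A v, 0 < z & u ^ 2 - v ^ 2 = z ^ 2]).
Proof.
case=> _ Ha; split.
- have [k [Hk Ht]] := two_exists Ha (isT : (0 < 44)%N) (isT : (0 < 117)%N) (isT : (0 < 240)%N).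
  case/or3P: Ht => /andP[Hx Hy].
  + exists (44 * k)%N, (117 * k)%N, (125 * k)%N; split => //; first lia.
    rewrite !expnMn; set t := (k ^ 2)%N; lia.
  + exists (44 * k)%N, (240 * k)%N, (244 * k)%N; split => //; first lia.
    rewrite !expnMn; set t := (k ^ 2)%N; lia.
  + exists (117 * k)%N, (240 * k)%N, (267 * k)%N; split => //; first lia.
    rewrite !expnMn; set t := (k ^ 2)%N; lia.
- have [k [Hk Ht]] := two_exists Ha (isT : (0 < 153)%N) (isT : (0 < 185)%N) (isT : (0 < 697)%N).
  case/or3P: Ht => /andP[Hx Hy].
  + exists (185 * k)%N, (153 * k)%N, (104 * k)%N; split => //; first lia.
    rewrite !expnMn; set t := (k ^ 2)%N; lia.
  + exists (697 * k)%N, (153 * k)%N, (680 * k)%N; split => //; first lia.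
    rewrite !expnMn; set t := (k ^ 2)%N; lia.
  + exists (697 * k)%N, (185 * k)%N, (672 * k)%N; split => //; first lia.
    rewrite !expnMn; set t := (k ^ 2)%N; lia.
Qed.
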